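(* Let $\kappa$ be a regular uncountable cardinal. Suppose that $\curlywedge^-(\sigma,\kappa,NS_\kappa|S)$ holds, where $\sigma$ is a regular uncountable cardinal less than $\kappa$ and $S$ is a stationary subset of $E^\kappa_{<\sigma}$. Then $\mathrm{cov}(\kappa,\sigma,\sigma,2)=\kappa$.
   Context: $acc(\kappa)$ is the set of nonzero limit ordinals below $\kappa$; $E^\kappa_{<\sigma} = \{\alpha\in acc(\kappa) : \mathrm{cf}(\alpha)<\sigma\}$; $NS_\kappa|S = \{B\subseteq\kappa : B\cap S\text{ nonstationary}\}$, with $(NS_\kappa|S)^+$ its complement in $P(\kappa)$. $P_\rho(X)=\{x\subseteq X:|x|<\rho\}$. For an infinite cardinal $\sigma$ and a limit ordinal $\delta\geq\sigma$, a subset $C$ of $P_\sigma(\delta)$ is a generalized club if there is $F:P_\omega(\delta)\to\delta$ with $\{x\in P_\sigma(\delta):F``P_\omega(x)\subseteq x\}\subseteq C$. $\curlywedge^-(\sigma,\kappa,J)$ asserts the existence, for $i\in\delta\in acc(\kappa)\setminus\sigma$, of a cofinal subset $C^i_\delta$ of $(P_\sigma(\delta),\subseteq)$ such that $\{\delta:\exists i<\delta\,(C^i_\delta\subseteq D)\}\in J^+$ for every generalized club $D\subseteq P_\sigma(\kappa)$. For cardinals $\rho_1\geq\rho_2\geq\rho_3\geq\omega$, $\rho_3\geq\rho_4\geq2$, $\mathrm{cov}(\rho_1,\rho_2,\rho_3,\rho_4)$ is the least cardinality of $Z\subseteq P_{\rho_2}(\rho_1)$ such that every $a\in P_{\rho_3}(\rho_1)$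 is covered by the union of some $Q\in P_{\rho_4}(Z)$. *)

(* Defs.v *)
From mathcomp Require Import all_boot.
From mathcomp Require Import boolp classical_sets cardinality.
Set Implicit Arguments. Unset Strict Implicit. Unset Printing Implicit Defensive.
Local Open Scope classical_set_scope.
Local Open Scope card_scope.

(* Ordinals below kappa are modelled by the elements of a type T equipped with
   a strict well-order [lt]; an ordinal alpha < kappa is identified with its
   initial segment [seg lt a]. *)

Definition is_wellorder (T : Type) (lt : T -> T -> Prop) :=
  well_founded lt /\
  (forall x y z, lt x y -> lt y z -> lt x z) /\
  (forall x y, x = y \/ lt x y \/ lt y x).

Definition seg (T : Type) (lt : T -> T -> Prop) (a : T) : set T := [set x | lt x a].

Definition card_lt (T U : Type) (A : set T) (B : set U) := A #<= B /\ ~ (B #<= A).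

Definition cofinal_in (T : Type) (lt : T -> T -> Prop) (A B : set T) :=
  A `<=` B /\ forall b, B b -> exists2 a, A a & (b = a \/ lt b a).

Definition is_cardinal (T : Type) (lt : T -> T -> Prop) (X : set T) :=
  forall t, X t -> ~ (seg lt t #= X).

Definition regular_card (T : Type) (lt : T -> T -> Prop) (X : set T) :=
  is_cardinal lt X /\ forall A, cofinal_in lt A X -> A #= X.

Definition is_limit (T : Type) (lt : T -> T -> Prop) (d : T) :=
  (exists b, lt b d) /\ forall b, lt b d -> exists2 g, lt b g & lt g d.

(* E^kappa_{<sigma}, sigma represented by the element s *)
Definition E_lt (T : Type) (lt : T -> T -> Prop) (s : T) : set T :=
  [set d | is_limit lt d /\
     exists A, cofinal_in lt A (seg lt d) /\ card_lt A (seg lt s)].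

Definition club (T : Type) (lt : T -> T -> Prop) (C : set T) :=
  cofinal_in lt C setT /\
  forall d, is_limit lt d -> cofinal_in lt (C `&` seg lt d) (seg lt d) -> C d.

Definition stationary (T : Type) (lt : T -> T -> Prop) (S : set T) :=
  forall C, club lt C -> S `&` C !=set0.

Definition P_lt (T U : Type) (R : set U) (X : set T) : set (set T) :=
  [set x | x `<=` X /\ card_lt x R].

Definition cofinal_family (T : Type) (C Y : set (set T)) :=
  C `<=` Y /\ forall y, Y y -> exists2 c, C c & y `<=` c.

Definition gen_club (T U : Type) (R : set U) (X : set T) (D : set (set T)) :=
  exists F : set T -> T,
    (forall e, finite_set e -> e `<=` X -> X (F e)) /\
    [set x | P_lt R X x /\ forall e, finite_set e -> e `<=` x -> x (F e)] `<=` D.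

(* curlywedge^-(sigma, kappa, NS_kappa | S) ; J^+ for J = NS_kappa|S means
   "meets S in a stationary set" *)
Definition curlywedge_minus_NS (T : Type) (lt : T -> T -> Prop) (s : T) (S : set T) :=
  exists Cf : T -> T -> set (set T),
    (forall d i, is_limit lt d -> ~ lt d s -> lt i d ->
        cofinal_family (Cf d i) (P_lt (seg lt s) (seg lt d))) /\
    (forall D, D `<=` P_lt (seg lt s) (@setT T) -> gen_club (seg lt s) (@setT T) D ->
        stationary lt ([set d | is_limit lt d /\ ~ lt d s /\
                                exists2 i, lt i d & Cf d i `<=` D] `&` S)).

Definition cov_family (T U2 U3 U4 : Type) (X : set T) (R2 : set U2) (R3 : set U3)
    (R4 : set U4) (Z : set (set T)) :=
  Z `<=` P_lt R2 X /\
  forall a, P_lt R3 X a -> exists Q, P_lt R4 Z Q /\ a `<=` \bigcup_(q in Q) q.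

Definition cov_eq (T U2 U3 U4 V : Type) (X : set T) (R2 : set U2) (R3 : set U3)
    (R4 : set U4) (W : set V) :=
  (exists Z, cov_family X R2 R3 R4 Z /\ Z #= W) /\
  (forall Z, cov_family X R2 R3 R4 Z -> W #<= Z).

(* Main.v *)
Require Import Defs.
From mathcomp Require Import all_boot.
From mathcomp Require Import boolp classical_sets cardinality.
Local Open Scope classical_set_scope.

Section Helpers.
Local Open Scope card_scope.
Variables (T : Type) (lt : T -> T -> Prop).
Hypothesis wo : is_wellorder lt.

Lemma lt_irr x : ~ lt x x.
Proof. case: wo => wf _; elim: (wf x) => y _ IH H; exact: (IH y H H). Qed.

Lemma lt_trans x y z : lt x y -> lt y z -> lt x z.
Proof. by case: wo => _ [tr _]; apply: tr. Qed.

Lemma le_lt_trans x y z : (x = y \/ lt x y) -> lt y z -> lt x z.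
Proof. by case=> [->//|h]; apply: lt_trans. Qed.

Lemma bounded_in (X A : set T) (reg : regular_card lt X) : A `<=` X -> ~ (X #<= A) ->
  exists2 b, X b & A `<=` seg lt b.
Proof.
move=> AX nA; apply: contrapT => nb; apply: nA.
have cof : cofinal_in lt A X.
  split => // b Xb.
  have [a [Aa nab]] : exists a, A a /\ ~ lt a b.
    apply: contrapT => h; apply: nb; exists b => // x Ax; apply: contrapT => nx.
    by apply: h; exists x.
  exists a => //; case: wo => _ [_ tri].
  case: (tri a b) => [->|[h|h]]; [by left | by exfalso; apply: nab | by right].
by have /card_eqPle [] := reg.2 A cof.
Qed.

Hypothesis kreg : regular_card lt [set: T].

Lemma bounded A : ~ ([set: T] #<= A) -> exists b, A `<=` seg lt b.
Proof. by move=> nA; have [b _ hb] := bounded_in setT A kreg (@subsetT _ A) nA; exists b. Qed.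

Lemma union_bounded (I : Type) (t0 : T) (L : set I) (G : I -> set T) :
  ~ ([set: T] #<= L) -> (forall x, L x -> ~ ([set: T] #<= G x)) ->
  exists b, forall x, L x -> G x `<=` seg lt b.
Proof.
move=> nL nG.
have /choice [f hf] : forall x, exists b, L x -> G x `<=` seg lt b.
  move=> x; case: (pselect (L x)) => Lx; last by exists t0.
  by have [b hb] := bounded _ (nG x Lx); exists b.
have : ~ ([set: T] #<= f @` L).
  by move=> h; apply: nL; exact: card_le_trans h (card_image_le f L).
move=> /(bounded _) [b hb]; exists b => x Lx y Gy.
apply: lt_trans (hf x Lx y Gy) _; apply: hb; by exists x.
Qed.

Lemma seg_small m : ~ ([set: T] #<= seg lt m).
Proof.
move=> h; apply: (kreg.1 m) => //; apply: Cantor_Bernstein => //; exact: card_leT.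
Qed.

Hypothesis nc : ~ countable [set: T].

Lemma no_max m : exists m', lt m m'.
Proof.
apply: contrapT => nm; apply: nc.
have cof : cofinal_in lt [set m] setT.
  split => // b _; exists m => //; case: wo => _ [_ tri].
  case: (tri b m) => [->|[h|h]]; [by left|by right|].
  by exfalso; apply: nm; exists b.
have /card_eqPle [_ h] := kreg.2 _ cof.
exact: sub_countable h (countable1 m).
Qed.

Variable t0 : T.

Definition pick (P : T -> Prop) : T :=
  match pselect (exists x, P x) with
  | left h => proj1_sig (cid h)
  | right _ => t0
  end.

Lemma pickP P : (exists x, P x) -> P (pick P).
Proof. by move=> h; rewrite /pick; case: pselect => // h'; exact: proj2_sig (cid h'). Qed.

Definition mx (p : T * T) := if pselect (lt p.1 p.2) then p.2 else p.1.

Lemma mx_ge1 p : p.1 = mx p \/ lt p.1 (mx p).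
Proof. by rewrite /mx; case: pselect => h /=; [right|left]. Qed.

Lemma mx_ge2 p : p.2 = mx p \/ lt p.2 (mx p).
Proof.
rewrite /mx; case: pselect => h /=; first by left.
case: wo => _ [_ tri]; case: (tri p.2 p.1) => [e|[h'|h']]; [by left|by right|].
by exfalso; apply: h.
Qed.

Definition R (p q : T * T) := lt (mx p) (mx q) \/
  (mx p = mx q /\ (lt p.1 q.1 \/ (p.1 = q.1 /\ lt p.2 q.2))).

Lemma R_wf : well_founded R.
Proof.
case: wo => wf _.
suff H : forall m x y, mx (x, y) = m -> Acc R (x, y).
  by case=> x y; exact: H _ _ _ erefl.
move=> m; induction m as [m IHm] using (well_founded_induction wf).
move=> x; induction x as [x IHx] using (well_founded_induction wf).
move=> y; induction y as [y IHy] using (well_founded_induction wf).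
move=> Em.
constructor => -[x' y'] [h|[e [h|[e1 h]]]] /=.
- by rewrite Em in h; exact: IHm h _ _ erefl.
- by apply: IHx => //; rewrite e.
- by move: e1 h => /= e1 h; subst x'; apply: IHy => //; rewrite e.
Qed.

Lemma R_tri p q : p = q \/ R p q \/ R q p.
Proof.
case: wo => _ [_ tri]; case: p q => [x y] [x' y'].
case: (tri (mx (x, y)) (mx (x', y'))) => [e|[h|h]].
- case: (tri x x') => [e1|[h|h]].
  + case: (tri y y') => [e2|[h|h]]; first by left; rewrite e1 e2.
      by right; left; right; split => //; right.
    by right; right; right; split => //; right.
  + by right; left; right; split => //; left.
  + by right; right; right; split => //; left.
- by right; left; left.
- by right; right; left.
Qed.

Definition hbody (p : T * T) (f : forall q, R q p -> T) : T :=
  pick (fun t => ~ exists q (H : R q p), f q H = t).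

Definition hpair := Fix R_wf (fun _ => T) hbody.

Lemma hpair_eq p : hpair p = pick (fun t => ~ exists q, R q p /\ hpair q = t).
Proof.
rewrite /hpair Fix_eq; last first.
  move=> x f g fg; rewrite /hbody.
  have -> // : f = g.
  apply: functional_extensionality_dep => q.
  by apply: functional_extensionality_dep => H; apply: fg.
rewrite /hbody; congr pick; apply: funext => t; apply: propext.
split => h [q [Hq e]]; apply: h; exists q; [by exists Hq | by split].
Qed.

Lemma hpair_fresh p : exists t, ~ exists q, R q p /\ hpair q = t.
Proof.
have [m' hm'] := no_max (mx p).
have sm := seg_small m'.
have [b hb] := @union_bounded T t0 (seg lt m')
   (fun x => (fun y => hpair (x, y)) @` seg lt m') sm
   (fun x _ h => sm (card_le_trans h (card_image_le _ _))).
exists b => -[[x y] [Rq e]].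
have le : mx (x, y) = mx p \/ lt (mx (x, y)) (mx p).
  by case: Rq => [h|[h _]]; [right|left].
have Lm : lt (mx (x, y)) m' by apply: le_lt_trans le hm'.
have Lx : lt x m' by apply: le_lt_trans (mx_ge1 (x, y)) Lm.
have Ly : lt y m' by apply: le_lt_trans (mx_ge2 (x, y)) Lm.
apply: (lt_irr b); apply: (hb x Lx b); by exists y.
Qed.

Lemma hpair_inj p q : hpair p = hpair q -> p = q.
Proof.
move=> e; case: (R_tri p q) => [//|[h|h]].
- move: (pickP _ (hpair_fresh q)); rewrite -hpair_eq => nq.
  by exfalso; apply: nq; exists p.
- move: (pickP _ (hpair_fresh p)); rewrite -hpair_eq => np.
  by exfalso; apply: np; exists q.
Qed.

Lemma inj_le (X Y : Type) (A : set X) (B : set Y) (f : X -> Y) :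
  {in A &, injective f} -> f @` A `<=` B -> A #<= B.
Proof.
move=> fi fAB; apply: card_le_trans (subset_card_le fAB).
by have /card_eqPle [] := inj_card_eq fi.
Qed.

Lemma triple_le : [set: T * T * T] #<= [set: T].
Proof.
apply: (@inj_le _ _ _ _ (fun w => hpair (hpair w.1, w.2))) => //.
move=> [[a b] c] [[a' b'] c'] _ _ /= /hpair_inj [] /hpair_inj [-> ->] ->.
by [].
Qed.

End Helpers.
Local Open Scope card_scope.

(* kappa = order type of (T, lt); sigma = the ordinal s < kappa; 2 = `I_2 *)
Theorem corollary4p12 (T : Type) (lt : T -> T -> Prop)
  (wo : is_wellorder lt)
  (kappa_reg : regular_card lt (@setT T)) (kappa_unc : ~ countable (@setT T))
  (s : T) (sigma_reg : regular_card lt (seg lt s)) (sigma_unc : ~ countable (seg lt s))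
  (S : set T) (hSE : S `<=` E_lt lt s) (hSstat : stationary lt S)
  (hw : curlywedge_minus_NS lt s S) :
  cov_eq (@setT T) (seg lt s) (seg lt s) `I_2 (@setT T).
Proof.
have [t0 _] : exists t : T, True.
  apply: contrapT => nT; apply: kappa_unc.
  have -> : [set: T] = set0 by apply/seteqP; split => x // _; apply: nT; exists x.
  exact: countable0.
have [x0 sx0] : exists x, seg lt s x.
  apply: contrapT => nT; apply: sigma_unc.
  have -> : seg lt s = set0.
    by apply/seteqP; split => x // sx; apply: nT; exists x.
  exact: countable0.
have single : forall b : T, P_lt (seg lt s) setT [set b].
  move=> b; split => //; split.
  - have sx : [set x0] `<=` seg lt s by move=> y ->.
    have e1 : ([set b] #<= [set x0])%card by have /card_eqPle [] := eq_card1 b x0.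
    exact: card_le_trans e1 (subset_card_le sx).
  - by move=> h; apply: sigma_unc; exact: sub_countable h (countable1 b).
have seglt : forall th, lt th s -> card_lt (seg lt th) (seg lt s).
  move=> th ths.
  have sub : seg lt th #<= seg lt s.
    by apply: subset_card_le => y yth; exact: lt_trans _ _ wo _ _ _ yth ths.
  split => // h; apply: (sigma_reg.1 th ths); exact: Cantor_Bernstein sub h.
have lower : forall Z : set (set T), cov_family [set: T] (seg lt s) (seg lt s) `I_2 Z -> [set: T] #<= Z.
  move=> Z [ZP cov]; apply: contrapT => nZ.
  have [b hb] := @union_bounded T lt wo kappa_reg (set T) t0 Z (fun z => z) nZ
    (fun z Zz h => (ZP z Zz).2.2 (card_le_trans (card_leT (seg lt s)) h)).
  have [Q [[QZ _] cover]] := cov _ (single b).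
  have [q Qq qb] := cover b erefl.
  exact: lt_irr _ _ wo _ (hb q (QZ q Qq) b qb).
case: hw => Cf [hC hst].
pose good (w : T * T * T) :=
  is_limit lt w.1.1 /\ ~ lt w.1.1 s /\ lt w.1.2 w.1.1 /\ lt w.2 s.
have le_s_d : forall d x, ~ lt d s -> lt x s -> lt x d.
  move=> d x nds xs; have [_ [_ tri]] := wo.
  case: (tri d s) => [->//|[h|h]]; first by exfalso; apply: nds.
  exact: lt_trans _ _ wo _ _ _ xs h.
have /choice [zc hzc] : forall w, exists c, good w ->
    Cf w.1.1 w.1.2 c /\ seg lt w.2 `<=` c.
  move=> [[d i] th]; case: (pselect (good (d, i, th))) => g; last by exists set0.
  have [lim [nds [id ths]]] : is_limit lt d /\ ~ lt d s /\ lt i d /\ lt th s := g.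
  have [_ cofc] := hC d i lim nds id.
  have Pth : P_lt (seg lt s) (seg lt d) (seg lt th).
    split; last exact: seglt th ths.
    by move=> y yth; exact: (le_s_d d y nds (lt_trans _ _ wo _ _ _ yth ths)).
  by have [c Cc sc] := cofc _ Pth; exists c.
pose Z := zc @` good.
have covZ : cov_family setT (seg lt s) (seg lt s) `I_2 Z.
  split.
    move=> _ [w gw <-]; have [Cc _] := hzc w gw.
    have [lim [nds [id ths]]] := gw.
    have [sub _] := hC _ _ lim nds id.
    by have [_ cl] := sub _ Cc; split.
  move=> a [_ aclt].
  have [C [g [Cs [nC ag]]]] : exists C (g : T -> T),
      C `<=` seg lt s /\ ~ (seg lt s #<= C)%card /\ a `<=` g @` C.
    have /card_subP [C Ca Cs] := aclt.1.
    have [Cle' aC'] := (card_eqPle C a).1 Ca.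
    have nC : ~ (seg lt s #<= C)%card.
      by move=> h; apply: aclt.2; exact: card_le_trans h Cle'.
    exists C; move: aC' => /pfcard_geP [a0|/surjfunPex [g ag]].
      by exists id; split=> //; split=> //; rewrite a0.
    by exists g; split=> //; split=> //; rewrite ag.
  have [th ths Cth] := bounded_in _ _ wo (seg lt s) C sigma_reg Cs nC.
  pose F (e : set T) := g (pick T t0 (fun xi => C xi /\ e = [set xi])).
  pose D := [set x | P_lt (seg lt s) setT x /\
                     forall e, finite_set e -> e `<=` x -> x (F e)].
  have Dsub : D `<=` P_lt (seg lt s) setT by move=> x [].
  have Dgc : gen_club (seg lt s) setT D by exists F; split.
  have clubT : club lt [set: T].
    split; last by [].
    by split => // b _; exists b => //; left.
  have [d [[[lim [nds [i id CD]]] Sd] _]] := hst D Dsub Dgc _ clubT.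
  pose w := (d, i, th).
  have gw : good w by [].
  have [Cz sz] := hzc w gw.
  have [_ clz] := CD _ Cz.
  exists [set zc w]; split.
    split; first by move=> _ ->; exists w.
    have c1 : ([set zc w] #<= `I_1)%card by have /card_eqPle [] := @card_set1 _ (zc w).
    split; first by apply: card_le_trans c1 _; rewrite card_le_II.
    by move=> h; have := card_le_trans h c1; rewrite card_le_II.
  move=> y ay; exists (zc w) => //.
  have [xi Cxi <-] := ag y ay.
  have zxi : zc w xi by apply: sz; exact: Cth.
  have := clz [set xi] (finite_set1 xi) (fun u (e : u = xi) => ltac:(by rewrite e)).
  rewrite /F.
  have [Cp ep] := pickP T t0 (fun xi' => C xi' /\ [set xi] = [set xi'])
    (ex_intro _ xi (conj Cxi erefl)).
  set pp := pick T t0 _.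
  have exi : xi = pp.
    by move: (erefl xi : [set xi] xi); rewrite ep.
  by rewrite -exi.
split; last exact: lower.
exists Z; split => //; apply: Cantor_Bernstein; last exact: lower.
apply: card_le_trans (card_image_le zc good) _.
apply: card_le_trans (subset_card_le (@subsetT _ good)) _.
exact: triple_le _ _ wo kappa_reg kappa_unc t0.
Qed.
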